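(* Let $\mathrm{Cl}_{p,q}$ be a non-degenerate real Clifford algebra with generators $e_1,\dots,e_n$, $n=p+q$, and let $\pi$ be the canonical matrix map defined below (extended linearly to $\mathrm{Cl}_{p,q}$). Let $e_s$ and $e_t$ be generators of $\mathrm{Cl}_{p,q}$. Then: (1) $\pi$ distributes over the Clifford product: $\pi(e_se_t)=\pi(e_s)\,\pi(e_t)$; (2) the set of all matrices $\mathbf{E}_S=\pi(e_S)$, $e_S\in\mathbf{B}$, forms a multiplicative semigroup.
   Context: Generators satisfy $e_ie_j=-e_je_i$ ($i\ne j$) and $e_i^2=\sigma_i\in\{1,-1\}$. For a multi-index $S=(s_1<\dots<s_m)\subseteq\{1,\dots,n\}$ let $e_S=e_{s_1}\cdots e_{s_m}$, $e_\emptyset=1$. The extended basis $\mathbf{B}$ is the list of all $2^n$ blades $e_S$ ordered by a fixed total order $\prec$ (extending $e_i\prec e_j$ for $i<j$, with $e_\emptyset=1$ first); each blade is indexed by its ordinal in this list. For blades $e_M,e_N$ one has $e_Me_N=m_{MN}\,e_{M\triangle N}$ with $m_{MN}\in\{1,-1\}$ ($\triangle$ = symmetric difference). The multiplication table is the $2^n\times 2^n$ array $\mathbf{M}=(e_Me_N)_{M,N}$. For a blade $e_S$, the coefficient map $C_S$ acts entrywise, sending an entry $x\,e_U$ to $x$ if $U=S$ and to $0$ otherwise; $\mathbf{A}_S:=C_S(\mathbf{M})$, i.e. $(\mathbf{A}_S)_{MN}=m_{MN}$ if $M\triangle N=S$ and $0$ otherwise. $\mathbf{G}$ is the diagonal $2^n\times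 2^n$ real matrix with diagonal entries $\sigma_M=e_M\ast e_M=\langle e_Me_M\rangle_0\in\{1,-1\}$. The canonical matrix map is $\pi(e_S)=\mathbf{E}_S:=\mathbf{G}\mathbf{A}_S$ (real $2^n\times 2^n$ matrix), extended linearly to all of $\mathrm{Cl}_{p,q}$. *)

(* Defs.v *)
From HB Require Import structures.
From mathcomp Require Import all_boot all_order all_algebra.
From mathcomp Require Import reals.
Set Implicit Arguments. Unset Strict Implicit. Unset Printing Implicit Defensive.
Import Order.TTheory GRing.Theory Num.Theory.
Local Open Scope ring_scope.

Section Clifford.
Variables (R : realType) (p q : nat).
Local Notation n := (p + q)%N.

(* Multi-indices are finite subsets of the generator indices 'I_n
   (generator e_{i+1} of the paper corresponds to i : 'I_n). *)
Definition symd (M N : {set 'I_n}) : {set 'I_n} := (M :\: N) :|: (N :\: M).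

(* e_i^2 = sigma_i : the first p generators square to 1, the last q to -1. *)
Definition sigma (i : 'I_n) : R := if (i < p)%N then 1 else -1.

(* The sign m_{MN} with e_M e_N = m_{MN} e_{M \triangle N}: one factor -1 for
   each anticommutation needed (pairs i in M, j in N, j < i), and a factor
   sigma_i for each repeated generator i in M :&: N. *)
Definition msign (M N : {set 'I_n}) : R :=
  (-1) ^+ #|[set ij : 'I_n * 'I_n | [&& ij.1 \in M, ij.2 \in N & (ij.2 < ij.1)%N]]|
  * \prod_(i in M :&: N) sigma i.

(* Elements of Cl_{p,q}: real coefficient vectors on the blade basis. *)
Definition Cl := {ffun {set 'I_n} -> R}.

Definition blade (S : {set 'I_n}) : Cl := [ffun U => (U == S)%:R].
Definition gen (i : 'I_n) : Cl := blade [set i].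

Definition cl_mul (x y : Cl) : Cl :=
  [ffun U => \sum_(M : {set 'I_n}) \sum_(N : {set 'I_n})
               (if symd M N == U then x M * y N * msign M N else 0)].

(* Matrices are indexed by ordinals of 'I_(2^n); b k is the k-th blade of
   the extended basis in the order \prec. *)
Variable b : 'I_(2 ^ n) -> {set 'I_n}.

Definition Amx (S : {set 'I_n}) : 'M[R]_(2 ^ n) :=
  \matrix_(i, j) (if symd (b i) (b j) == S then msign (b i) (b j) else 0).

(* G = diag(sigma_M), sigma_M = <e_M e_M>_0 = m_{MM}. *)
Definition Gmx : 'M[R]_(2 ^ n) :=
  \matrix_(i, j) (if i == j then msign (b i) (b i) else 0).

Definition Emx (S : {set 'I_n}) : 'M[R]_(2 ^ n) := Gmx *m Amx S.

Definition matmap (x : Cl) : 'M[R]_(2 ^ n) := \sum_(S : {set 'I_n}) x S *: Emx S.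

End Clifford.

(* Main.v *)
Require Import Defs.
From HB Require Import structures.
From mathcomp Require Import all_boot all_order all_algebra reals.
From mathcomp Require Import ring.
Import Order.TTheory GRing.Theory Num.Theory.
Set Implicit Arguments. Unset Strict Implicit. Unset Printing Implicit Defensive.
Local Open Scope ring_scope.

Section Gen.
Variables (R : comRingType) (T : finType).
Lemma prod_symd (f : T -> R) (A B : {set T}) :
  (forall i, f i * f i = 1) ->
  \prod_(i in (A :\: B) :|: (B :\: A)) f i = \prod_(i in A) f i * \prod_(i in B) f i.
Proof.
move=> ff.
rewrite (eq_bigl [predU (A :\: B) & (B :\: A)]); last by move=> x; rewrite !inE.
rewrite bigU /=; last first.
  by rewrite -setI_eq0; apply/eqP/setP=> x; rewrite !inE; case: (x \in A); case: (x \in B).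
rewrite [X in _ = X * _](big_setID B) [X in _ = _ * X](big_setID A) /= [B :&: A]setIC.
rewrite mulrCA !mulrA -big_split /= [X in X * _ * _]big1 ?mul1r //.
Qed.
End Gen.

Section Main.
Variables (R : realType) (p q : nat).
Local Notation n := (p + q)%N.
Implicit Types M N K S T U X Y C : {set 'I_n}.

Definition Pset M N : {set 'I_n * 'I_n} :=
  [set ij : 'I_n * 'I_n | [&& ij.1 \in M, ij.2 \in N & (ij.2 < ij.1)%N]].

Lemma msignE M N : msign R M N =
  \prod_(ij in Pset M N) (-1 : R) * \prod_(i in M :&: N) sigma R i.
Proof. by rewrite /msign prodr_const. Qed.

Lemma sigma_sq (i : 'I_n) : sigma R i * sigma R i = 1.
Proof. by rewrite /sigma; case: ifP => _; rewrite ?mulrNN mulr1. Qed.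

Lemma m1_sq : (-1 : R) * (-1) = 1.
Proof. by rewrite mulrNN mulr1. Qed.

Lemma msign_symdl X Y C : msign R (symd X Y) C = msign R X C * msign R Y C.
Proof.
rewrite !msignE.
have -> : Pset (symd X Y) C = (Pset X C :\: Pset Y C) :|: (Pset Y C :\: Pset X C).
  apply/setP=> x; rewrite !inE.
  by case: (x.1 \in X); case: (x.1 \in Y); case: (x.2 \in C); case: (x.2 < x.1)%N.
have -> : symd X Y :&: C = ((X :&: C) :\: (Y :&: C)) :|: ((Y :&: C) :\: (X :&: C)).
  apply/setP=> x; rewrite !inE.
  by case: (x \in X); case: (x \in Y); case: (x \in C).
rewrite (@prod_symd _ _ (fun _ => -1)); last by move=> _; exact: m1_sq.
rewrite (@prod_symd _ _ (@sigma R p q)); last by move=> i; exact: sigma_sq.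
rewrite !mulrA; congr (_ * _); rewrite -!mulrA; congr (_ * _); by rewrite mulrC.
Qed.

Lemma msign_symdr X Y C : msign R C (symd X Y) = msign R C X * msign R C Y.
Proof.
rewrite !msignE.
have -> : Pset C (symd X Y) = (Pset C X :\: Pset C Y) :|: (Pset C Y :\: Pset C X).
  apply/setP=> x; rewrite !inE.
  by case: (x.2 \in X); case: (x.2 \in Y); case: (x.1 \in C); case: (x.2 < x.1)%N.
have -> : C :&: symd X Y = ((C :&: X) :\: (C :&: Y)) :|: ((C :&: Y) :\: (C :&: X)).
  apply/setP=> x; rewrite !inE.
  by case: (x \in X); case: (x \in Y); case: (x \in C).
rewrite (@prod_symd _ _ (fun _ => -1)); last by move=> _; exact: m1_sq.
rewrite (@prod_symd _ _ (@sigma R p q)); last by move=> i; exact: sigma_sq.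
by rewrite !mulrA; congr (_ * _); rewrite -!mulrA; congr (_ * _); rewrite mulrC.
Qed.

Lemma prod_sq (I : finType) (A : {set I}) (f : I -> R) :
  (forall i, f i * f i = 1) -> (\prod_(i in A) f i) * (\prod_(i in A) f i) = 1.
Proof. by move=> ff; rewrite -big_split /= big1. Qed.

Lemma msign_sq M N : msign R M N * msign R M N = 1.
Proof.
rewrite msignE mulrACA prod_sq; last by move=> _; exact: m1_sq.
by rewrite prod_sq ?mulr1 // => i; exact: sigma_sq.
Qed.

Lemma msign_pm M N : msign R M N = 1 \/ msign R M N = -1.
Proof.
have : (msign R M N) ^+ 2 == 1 by rewrite expr2 msign_sq.
by rewrite sqrf_eq1 => /orP [] /eqP ->; [left|right].
Qed.

Lemma symdK M N : symd M (symd M N) = N.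
Proof.
by apply/setP=> x; rewrite !inE; case: (x \in M); case: (x \in N).
Qed.

Lemma symd_cond M S K T : (symd (symd M S) K == T) = (symd M K == symd S T).
Proof.
apply/eqP/eqP => /setP h; apply/setP => x; move: (h x); rewrite !inE;
 by case: (x \in M); case: (x \in S); case: (x \in K); case: (x \in T).
Qed.

Lemma sign_id M N K : msign R M N * (msign R N N * msign R N K) =
  msign R (symd M N) (symd N K) * msign R M K.
Proof.
rewrite msign_symdl !msign_symdr.
rewrite -[LHS]mulr1 -(msign_sq M K); ring.
Qed.

Variable b : 'I_(2 ^ n) -> {set 'I_n}.
Hypothesis b_bij : bijective b.

Lemma EmxE S i j : Emx R b S i j =
  msign R (b i) (b i) * (if symd (b i) (b j) == S then msign R (b i) (b j) else 0).
Proof.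
rewrite /Emx mxE (bigD1 i) //= big1 => [|k /negbTE nk]; last by rewrite !mxE eq_sym nk mul0r.
by rewrite !mxE eqxx addr0.
Qed.

Lemma Emx_mul S T : Emx R b S *m Emx R b T = msign R S T *: Emx R b (symd S T).
Proof.
case: b_bij => binv bK Kb.
apply/matrixP => i k; rewrite mxE [RHS]mxE.
set j0 := binv (symd (b i) S).
have bj0 : b j0 = symd (b i) S by rewrite /j0 Kb.
rewrite (bigD1 j0) //= big1 => [|j nj]; last first.
  rewrite EmxE; case: eqP => [h|_]; last by rewrite mulr0 mul0r.
  have : b j = b j0 by rewrite bj0 -h symdK.
  by move/(can_inj bK)/eqP; rewrite (negbTE nj).
rewrite addr0 !EmxE bj0 symdK eqxx -symd_cond.
case: eqP => [<-|_]; last by rewrite !mulr0.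
have := symdK (b i) S; move: (symd (b i) S) => N hN; rewrite -hN.
rewrite [RHS]mulrCA -sign_id; ring.
Qed.

Lemma matmap_single (x : Cl R p q) S0 c :
  (forall U, x U = if U == S0 then c else 0) -> matmap b x = c *: Emx R b S0.
Proof.
move=> hx; rewrite /matmap (bigD1 S0) //= big1 => [|U nU]; first by rewrite hx eqxx addr0.
by rewrite hx (negbTE nU) scale0r.
Qed.

Lemma gen_if (s : 'I_n) U : gen R s U = if U == [set s] then 1 else 0.
Proof. by rewrite /gen /blade ffunE; case: eqP. Qed.

Lemma cl_mul_gen (s t : 'I_n) U : cl_mul (gen R s) (gen R t) U =
  if U == symd [set s] [set t] then msign R [set s] [set t] else 0.
Proof.
rewrite /cl_mul ffunE (bigD1 [set s]) //= [X in _ + X]big1 => [|M nM]; last first.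
  by apply: big1 => N _; rewrite gen_if (negbTE nM); case: ifP; rewrite ?mul0r.
rewrite addr0 (bigD1 [set t]) //= [X in _ + X]big1 => [|N nN]; last first.
  by rewrite (gen_if t) (negbTE nN); case: ifP; rewrite ?mulr0 ?mul0r.
rewrite addr0 !gen_if !eqxx !mul1r eq_sym.
by case: ifP.
Qed.

End Main.

Unset Implicit Arguments.
Theorem theorem1 (R : realType) (p q : nat)
  (b : 'I_(2 ^ (p + q)) -> {set 'I_(p + q)})
  (b_bij : bijective b)
  (b_one_first : forall k, b k = set0 -> nat_of_ord k = 0%N)
  (b_gen_order : forall (i j : 'I_(p + q)) (k l : 'I_(2 ^ (p + q))),
      (i < j)%N -> b k = [set i] -> b l = [set j] -> (k < l)%N) :
  (forall s t : 'I_(p + q),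
     matmap b (cl_mul (gen R s) (gen R t)) = matmap b (gen R s) *m matmap b (gen R t))
  /\
  (forall X Y : 'M[R]_(2 ^ (p + q)),
     (exists (c : R) (S : {set 'I_(p + q)}), (c = 1 \/ c = -1) /\ X = c *: Emx R b S) ->
     (exists (c : R) (S : {set 'I_(p + q)}), (c = 1 \/ c = -1) /\ Y = c *: Emx R b S) ->
     (exists (c : R) (S : {set 'I_(p + q)}), (c = 1 \/ c = -1) /\ X *m Y = c *: Emx R b S)).
Proof.
split.
  move=> s t.
  rewrite (matmap_single b (cl_mul_gen R s t)).
  rewrite (matmap_single b (S0 := [set s]) (c := 1) (gen_if R s)).
  rewrite (matmap_single b (S0 := [set t]) (c := 1) (gen_if R t)).
  by rewrite !scale1r (Emx_mul R b_bij).
move=> X Y [c [S [hc ->]]] [d [T [hd ->]]].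
exists (c * d * msign R S T), (symd S T); split; last first.
  by rewrite -scalemxAl -scalemxAr (Emx_mul R b_bij) !scalerA mulrA.
by case: hc => ->; case: hd => ->; case: (msign_pm R S T) => ->;
  rewrite ?mulr1 ?mul1r ?mulrN1 ?mulN1r ?opprK; auto.
Qed.
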